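(* Let $G$ be a group, $N$ a normal subgroup and $\mu\in\mathrm{Q}(N)^G$. Then $D(\mu)=\sup_{g\in G,\,x\in N}|\mu([g,x])|$.
   Context: $[g,x]=gxg^{-1}x^{-1}$. $\mathrm{Q}(N)^G$ is the space of homogeneous quasimorphisms $\mu\colon N\to\mathbb{R}$ (i.e. $D(\mu)=\sup_{x_1,x_2\in N}|\mu(x_1x_2)-\mu(x_1)-\mu(x_2)|<\infty$ and $\mu(x^n)=n\mu(x)$ for $n\in\mathbb{Z}$) satisfying $\mu(gxg^{-1})=\mu(x)$ for all $g\in G$, $x\in N$. *)

(* Defs.v *)
From HB Require Import structures.
From mathcomp Require Import all_boot all_order all_algebra.
From mathcomp Require Import all_classical all_reals.
Set Implicit Arguments. Unset Strict Implicit. Unset Printing Implicit Defensive.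
Import Order.TTheory GRing.Theory Num.Theory.
Local Open Scope classical_set_scope.
Local Open Scope ring_scope.

Section Defs.
Variable G : groupType.

(* commutator with the paper's convention [g,x] = g x g^-1 x^-1 *)
Definition pcomm (g x : G) : G := (g * x * g^-1 * x^-1)%g.

Definition zpowg (x : G) (n : int) : G :=
  match n with
  | Posz k => (x ^+ k)%g
  | Negz k => ((x ^+ k.+1)^-1)%g
  end.

Definition normal_subgroup (N : set G) : Prop :=
  [/\ N 1%g,
      (forall x y, N x -> N y -> N (x * y)%g),
      (forall x, N x -> N (x^-1)%g)
    & (forall g x, N x -> N (g * x * g^-1)%g)].

Variable R : realType.

Definition defect_set (N : set G) (mu : G -> R) : set R :=
  [set `|mu (x1 * x2)%g - mu x1 - mu x2| | x1 in N & x2 in N].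

Definition defect (N : set G) (mu : G -> R) : R := sup (defect_set N mu).

(* mu (only its values on N matter) is a homogeneous quasimorphism on N,
   invariant under conjugation by G: mu \in Q(N)^G *)
Definition inv_hom_quasimorphism (N : set G) (mu : G -> R) : Prop :=
  [/\ (exists C : R, forall x1 x2, N x1 -> N x2 ->
          `|mu (x1 * x2)%g - mu x1 - mu x2| <= C),
      (forall x (n : int), N x -> mu (zpowg x n) = n%:~R * mu x)
    & (forall g x, N x -> mu (g * x * g^-1)%g = mu x)].
End Defs.

(* Main.v *)
Require Import Defs.
From HB Require Import structures.
From mathcomp Require Import all_boot all_order all_algebra.
From mathcomp Require Import all_classical all_reals.
From mathcomp Require Import lra.
Import Order.TTheory GRing.Theory Num.Theory.
Local Open Scope classical_set_scope.
Local Open Scope ring_scope.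

Lemma ident (G : groupType) (x y : G) :
  (pcomm (x * y^-1) (y * x * y) * ((y * x) * (y * x) * (y * x) * (x * x * x)^-1)
   = (x * x) * (y * y * y) * (x * x)^-1)%g.
Proof.
rewrite /pcomm !invgM !invgK !mulgA.
by rewrite !(mulgK, mulgVK).
Qed.

Theorem proposition4p4 (G : groupType) (R : realType) (N : set G) (mu : G -> R)
  (hN : normal_subgroup N) (hmu : inv_hom_quasimorphism N mu) :
  defect N mu = sup [set `|mu (pcomm g x)| | g in [set: G] & x in N].
Proof.
case: hN => [N1 NM NV NC].
case: hmu => [[B hB] hpow hconj].
have mu1 : mu 1%g = 0.
  by have := hpow 1%g 0 N1; rewrite /= expg0 mul0r.
have muV : forall x, N x -> mu (x^-1)%g = - mu x.
  move=> x Nx; have := hpow x (Negz 0) Nx; rewrite /= expg1 => ->.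
  by rewrite NegzE mulN1r.
have mu3 : forall x, N x -> mu (x * x * x)%g = 3 * mu x.
  move=> x Nx; have := hpow x 3 Nx; rewrite /= !expgS expg0 mulg1 mulgA => ->.
  done.
set E := defect_set N mu.
set D := defect N mu.
have E0 : E !=set0.
  by exists `|mu (1 * 1)%g - mu 1%g - mu 1%g|; exists 1%g => //; exists 1%g.
have Eub : has_ubound E.
  by exists B => _ [x1 Nx1 [x2 Nx2 <-]]; apply: hB.
have inE : forall x1 x2, N x1 -> N x2 ->
    `|mu (x1 * x2)%g - mu x1 - mu x2| <= D.
  move=> x1 x2 N1' N2'; apply: ub_le_sup => //.
  by exists x1 => //; exists x2.
set S := [set `|mu (pcomm g x)| | g in [set: G] & x in N].
have commD : forall g x, N x -> `|mu (pcomm g x)| <= D.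
  move=> g x Nx.
  have := inE (g * x * g^-1)%g (x^-1)%g (NC g x Nx) (NV x Nx).
  by rewrite hconj // muV // opprK subrK.
have S0 : S !=set0.
  by exists `|mu (pcomm 1%g 1%g)|; exists 1%g => //; exists 1%g.
have Sub : has_ubound S.
  by exists D => _ [g _ [x Nx <-]]; apply: commD.
set C := sup S.
have inS : forall g x, N x -> `|mu (pcomm g x)| <= C.
  by move=> g x Nx; apply: ub_le_sup => //; exists g => //; exists x.
have CD : C <= D.
  by apply: ge_sup => // _ [g _ [x Nx <-]]; apply: commD.
have key : forall x y, N x -> N y ->
    3 * `|mu (x * y)%g - mu x - mu y| <= C + 2 * D.
  move=> x y Nx Ny.
  have Nyx : N (y * x)%g by apply: (NM).
  have Nxx : N (x * x)%g by apply: (NM).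
  have Np : N ((y * x) * (y * x) * (y * x))%g by apply: (NM) => //; apply: (NM).
  have Nq : N ((x * x * x)^-1)%g by apply: (NV); apply: (NM).
  have Nc : N (pcomm (x * y^-1) (y * x * y))%g.
    apply: (NM); last by apply: (NV); apply: (NM) => //; apply: (NM).
    by apply: NC; apply: (NM) => //; apply: (NM).
  have e1 := inE _ _ Nc (NM _ _ Np Nq).
  have e2 := inE _ _ Np Nq.
  have hc := inS (x * y^-1)%g (y * x * y)%g (NM _ _ (NM _ _ Ny Nx) Ny).
  rewrite ident hconj in e1; last by apply: (NM) => //; apply: (NM).
  rewrite mu3 // in e1.
  rewrite mu3 // muV ?mu3 // in e1 e2; last by apply: (NM).
  have yx : mu (y * x)%g = mu (x * y)%g.
    have := hconj (x^-1)%g (x * y)%g (NM _ _ Nx Ny).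
    by rewrite invgK !mulgA mulVg mul1g => <-.
  rewrite yx in e2.
  move: e1 e2 hc; rewrite !ler_norml.
  move=> /andP[a1 a2] /andP[b1 b2] /andP[c1 c2].
  have [h|h] := lerP 0 (mu (x * y)%g - mu x - mu y).
    rewrite ger0_norm //; lra.
  rewrite ltr0_norm //; lra.
have DC : D <= (C + 2 * D) / 3.
  apply: ge_sup => // _ [x1 N1' [x2 N2' <-]].
  have := key _ _ N1' N2'; lra.
apply/eqP; rewrite eq_le; apply/andP; split; [lra | exact: CD].
Qed.
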